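(* Let $(\alpha_1,\alpha_2)$ be a good pair with canonical representation $(x,y,z)$ and set $\alpha_3:=1-x^2$. Suppose $a_{12},a_{13},a_{23},d$ are nonnegative reals satisfying all of \begin{align*} a_{12}(a_{12}+d)&>\alpha_1+\alpha_2-1,\\ a_{13}(a_{13}+d)&>\alpha_1+\alpha_3-1,\\ a_{23}(a_{23}+d)&>\alpha_2+\alpha_3-1,\\ \textstyle\sum_{ij\in\{12,13,23\}}a_{ij}(a_{ij}+d)&>\alpha_1+\alpha_2+\alpha_3-1,\\ a_{12}^2+2a_{13}^2+2a_{23}^2+2a_{13}d+2a_{23}d&>2\alpha_1+2\alpha_2+3\alpha_3-3,\\ 2a_{12}^2+a_{13}^2+2a_{23}^2+2a_{12}d+2a_{23}d&>2\alpha_1+3\alpha_2+2\alpha_3-3,\\ 2a_{12}^2+2a_{13}^2+a_{23}^2+2a_{12}d+2a_{13}d&>3\alpha_1+2\alpha_2+2\alpha_3-3. \end{align*} Then $a_{12}+a_{13}+a_{23}+d>1$.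
   Context: $\tau=\frac{4-\sqrt7}{9}$. A pair $(\alpha_1,\alpha_2)\in[0,1]^2$ is a good pair if $\max\{\frac14,\frac{\alpha_1+\sqrt{2\alpha_1-1}}{2}\}\le\alpha_2$ and $\max\{\alpha_2,1-\alpha_2,\frac{1+\tau^2}{2}\}\le\alpha_1$, and in addition the unique $(x,y,z)\in[0,1]^3$ with $x+y+z=1$, $x\ge\frac12$, $\alpha_1=x^2+y^2$, $\alpha_2=x^2+z^2$ satisfies $2x^2+z^2\ge1$; this $(x,y,z)$ is the canonical representation. *)

(* Defs.v *)
From Stdlib Require Import Reals Lra.
Open Scope R_scope.

Definition tau : R := (4 - sqrt 7) / 9.

Definition is_rep (a1 a2 x y z : R) : Prop :=
  0 <= x <= 1 /\ 0 <= y <= 1 /\ 0 <= z <= 1 /\ x + y + z = 1 /\ x >= 1/2 /\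
  a1 = x^2 + y^2 /\ a2 = x^2 + z^2.

Definition canonical_rep (a1 a2 x y z : R) : Prop :=
  is_rep a1 a2 x y z /\
  (forall x' y' z', is_rep a1 a2 x' y' z' -> x' = x /\ y' = y /\ z' = z).

Definition good_pair (a1 a2 : R) : Prop :=
  0 <= a1 <= 1 /\ 0 <= a2 <= 1 /\
  Rmax (1/4) ((a1 + sqrt (2 * a1 - 1)) / 2) <= a2 /\
  Rmax (Rmax a2 (1 - a2)) ((1 + tau^2) / 2) <= a1 /\
  exists x y z, canonical_rep a1 a2 x y z /\ 2 * x^2 + z^2 >= 1.

(* Main.v *)
Require Import Defs.
From Stdlib Require Import Reals Lra Psatz.
Open Scope R_scope.

Lemma case1 (x y z A B C d : R) : 0 <= x -> 0 <= y -> 0 <= z -> x + y + z = 1 -> z <= y -> 2*y <= x -> 69/100 <= x ->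
  0<=A -> 0<=B -> 0<=C -> 0<=d -> A+B+C+d <= 1 -> 3*A + d >= 2 ->
  B*(B+d) > y^2 -> C*(C+d) > z^2 ->
  A^2 + 2*B*(B+d) + 2*C*(C+d) > x^2 + 2*y^2+2*z^2 ->
  False.
Proof. intros. 
set (u := B + d/2 - y) in *. set (v := C + d/2 - z) in *.
assert (u > 0) by (unfold u; nra). assert (v > 0) by (unfold v; nra).
assert (HA: A <= x - (u + v)) by (unfold u, v; lra).
assert (HB: B = y + u - d/2) by (unfold u; lra).
assert (HC: C = z + v - d/2) by (unfold v; lra).
assert (A^2 <= (x - (u+v))^2) by nra.
assert (HT: -2*x*(u+v) + (u+v)^2 + 4*y*u + 4*z*v + 2*u^2 + 2*v^2 - d^2 > 0).
{ rewrite HB, HC in *. nra. }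
assert (HT2: (u+v)*(3*(u+v) - 2*x + 4*y) - d^2 > 0) by nra.
destruct (Rle_lt_dec (u+v) d).
- nra.
- assert (3*(u+v) - 2*x + 4*y < 0) by lra. nra.
Qed.

Lemma zoneZ (x y z u v d : R) : 0 <= x -> 0 <= y -> 0 <= z -> x + y + z = 1 -> z <= y -> 699/1000 <= x -> y <= 293/1000 ->
  0 <= u -> 0 <= v -> 0 <= d -> d <= 1 -> d/2 <= z + v -> d/2 <= y + u ->
  9/5 <= 3*(x-(u+v)) + d -> 3*(x-(u+v)) + d <= 2 ->
  -6*x*(u+v) + 2*(u+v) + 3*(u+v)^2 + u*(4*y-2*z) + v*(4*z-2*y) + 2*u^2+2*v^2-2*u*v + d*x - d*(u+v) - 3*d^2/2 < 0.
Proof. intros.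
set (w := u + v) in *.
assert (E: -6*x*w + 2*w + 3*w^2 + u*(4*y-2*z) + v*(4*z-2*y) + 2*u^2+2*v^2-2*u*v + d*x - d*w - 3*d^2/2
  = w*(2 - 6*x + 4*z - 2*y) + 5*w^2 + 6*u*(y-z-v) + d*(x-w) - 3*d^2/2) by (unfold w; ring).
rewrite E; clear E.
assert (Hq1: 6*u*(y-z-v) <= 6*u*(y-d/2)) by nra.
assert (Hw: (w - (x - 2/3 + d/3))*((x - 3/5 + d/3) - w) >= 0) by nra.
destruct (Rle_lt_dec (d/2) y).
- assert (6*u*(y-d/2) <= 6*w*(y-d/2)) by (unfold w; nra).
  assert (Hyz: 4*z + 4*y = 4 - 4*x) by lra.
  assert (F1: w*(2 - 6*x + 4*z - 2*y) + 5*w^2 + 6*w*(y-d/2) + d*(x-w) - 3*d^2/2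
     = w*(6 - 10*x - 4*d) + 5*w^2 + d*x - 3*d^2/2) by (assert (Hz1: z = 1-x-y) by lra; rewrite Hz1; field).
  assert (F2: w*(6 - 10*x - 4*d) + 5*w^2 <= w*(-1/3 - 2*d/3) - 5*(x - 2/3 + d/3)*(x - 3/5 + d/3)) by nra.
  assert (F3: w*(-1/3 - 2*d/3) <= (x - 2/3 + d/3)*(-1/3 - 2*d/3)) by nra.
  assert (G: (x - 2/3 + d/3)*(-1/3 - 2*d/3) - 5*(x - 2/3 + d/3)*(x - 3/5 + d/3) + d*x - 3*d^2/2 < 0).
  { pose proof (pow2_ge_0 (d - (22-27*x)/41)). nra. }
  lra.
- assert (6*u*(y-d/2) <= 0) by nra.
  assert (Hw0: 0 <= w) by (unfold w; lra).
  assert (F1: w*(2 - 6*x + 4*z - 2*y) <= w*(2 - 6*x + d)) by (apply Rmult_le_compat_l; lra).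
  assert (Hx1: 1 - d <= x) by lra.
  assert (Hlo: (x - 2/3 + d/3)*(2-6*x) + 5*(x - 2/3 + d/3)^2 + d*x - 3*d^2/2 < 0) by nra.
  assert (Hhi: (x - 3/5 + d/3)*(2-6*x) + 5*(x - 3/5 + d/3)^2 + d*x - 3*d^2/2 < 0).
  { pose proof (pow2_ge_0 (d - 21/17*(x-3/5))). nra. }
  assert (Hint: w*(2-6*x) + 5*w^2 = 15*(((x - 2/3 + d/3)*(2-6*x) + 5*(x - 2/3 + d/3)^2)*((x - 3/5 + d/3) - w)
       + ((x - 3/5 + d/3)*(2-6*x) + 5*(x - 3/5 + d/3)^2)*(w - (x - 2/3 + d/3)))
       - 5*(w - (x - 2/3 + d/3))*((x - 3/5 + d/3) - w)) by field.
  nra.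
Qed.

Lemma caseM (A B C d : R) :
  0<=A -> 0<=B -> 0<=C -> 0<=d -> A+B+C+d = 1 -> 3*A + d <= 9/5 -> B <= 1/2 -> C <= 1/2 ->
  A*B+B*C+C*A + d/2 >= 2387/10000.
Proof. intros.
assert (HBC: B*C >= 0) by nra.
assert (HBC2: B*C >= (B+C)/2 - 1/4) by nra.
destruct (Rle_lt_dec (B+C) (1/2)).
- assert ((A - (1/2 - d))*(3/5 - d/3 - A) >= 0) by nra.
  pose proof (pow2_ge_0 (d - 3/40)). nra.
- assert (A*(1/2 - d - A) >= 0) by nra. nra.
Qed.

Lemma mnp (a b : R) : 0 <= a -> b <= 0 -> a*b <= 0.
Proof. intros. nra. Qed.
Lemma caseB (x y z k u v B d : R) : 0 <= x -> 0 <= y -> 0 <= z -> x + y + z = 1 -> z <= y -> 699/1000 <= x -> y <= 293/1000 -> 3/25 <= x - 2*y ->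
  0 <= k -> k^2 = x^2 - 2*x*(y+z) - 2*y*z -> y <= k -> 0 <= u -> 0 <= v -> 0 <= d -> u <= 3/50 + d/4 -> x <= 1 ->
  1/2 <= B -> B <= x + y - k - (u+v) ->
  B^2 + 2*(2*k*u + u^2 - d^2/4) + 2*(2*z*v+v^2-d^2/4) > 1 - x^2 - z^2 -> False.
Proof. intros.
assert (HS: (x+y+z)^2 = 1) by (rewrite H2; ring).
assert (E: (x+y-k)^2 - (1 - x^2 - z^2) = -2*(k-y)*(x-k)).
{ rewrite <- HS. lra. }
assert (HB2: B^2 <= (x+y-k - (u+v))^2).
{ apply pow_incr. lra. }
assert (Hxk: x - k >= 1/2 - y + u) by lra.
assert (Hdl: k - y <= x - 1/2 - u) by lra.
assert (Hz: z <= 1/6) by lra.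
assert (Hv: -2*v*(x+y-k) + 4*z*v + 3*v^2 + 2*u*v <= 0).
{ assert (-2*(x+y-k) + 4*z + 3*v + 2*u <= 0) by lra.
  replace (-2*v*(x+y-k) + 4*z*v + 3*v^2 + 2*u*v) with (v*(-2*(x+y-k) + 4*z + 3*v + 2*u)) by ring.
  apply mnp; lra. }
assert (Hu: -2*(k-y)*(x-k) - 2*u*(x+y-k) + 4*k*u + 3*u^2 <= d^2).
{ replace (-2*(k-y)*(x-k) - 2*u*(x+y-k) + 4*k*u + 3*u^2) with ((k-y)*(6*u-2*(x-k)) + u*(3*u-2*(x-2*y))) by ring.
  destruct (Rle_lt_dec u (3/50)).
  - assert ((k-y)*(6*u-2*(x-k)) <= 0) by (apply mnp; lra).
    assert (u*(3*u-2*(x-2*y)) <= 0) by (apply mnp; lra).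
    assert (0 <= d^2) by apply pow2_ge_0. lra.
  - set (t := u - 3/50) in *.
    assert (Ht: 0 <= t) by (unfold t; lra).
    assert (Hd: 4*t <= d) by (unfold t; lra).
    assert (Hd2: (4*t)^2 <= d^2) by (apply pow_incr; lra).
    assert (T2: u*(3*u-2*(x-2*y)) <= u*(3*u - 6/25)) by (apply Rmult_le_compat_l; lra).
    assert (T2': u*(3*u - 6/25) = 3*t^2 + 3/25*t - 9/2500) by (unfold t; field).
    assert (T1: 6*u-2*(x-k) <= 4*t - 87/500) by (unfold t in *; lra).
    destruct (Rle_lt_dec (4*t) (87/500)).
    + assert ((k-y)*(6*u-2*(x-k)) <= 0) by (apply mnp; lra).
      pose proof (pow2_ge_0 (t - 3/650)). lra.
    + assert (Hdl2: k - y <= 11/25 - t) by (unfold t in *; lra).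
      assert ((k-y)*(6*u-2*(x-k)) <= (11/25 - t)*(4*t - 87/500)).
      { apply Rle_trans with ((k-y)*(4*t - 87/500)).
        - apply Rmult_le_compat_l; lra.
        - apply Rmult_le_compat_r; lra. }
      pose proof (pow2_ge_0 (t - 1027/17000)). lra. }
assert (d^2 >= 0) by (apply Rle_ge, pow2_ge_0).
lra. Qed.

Lemma P4 (x y z d W A C : R) : 0 <= x -> 0 <= y -> 0 <= z -> x + y + z = 1 -> z <= y -> 2*x^2+z^2 >= 1 -> 699/1000 <= x -> y <= 293/1000 ->
  0 <= d -> d <= 1/10 -> 3/50 + d/4 <= W -> W <= x - 1/2 -> A + C = y + z + W - d -> y + 3/50 - d/4 <= A -> 0 <= C -> C*(C+d) >= z^2 ->
  0 <= W*(2*x-1-W) - d*(x-1/2-W) + A*C - y*z.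
Proof. intros. 
assert (Hz: z <= C + d/2) by nra.
assert (HAC: A*C - y*z >= (3/50 - d/4)*C - y*d/2) by nra.
assert (HC: (3/50 - d/4)*C >= 0) by nra.
assert (HW: (W - (3/50+d/4))*(x-1/2-W) >= 0) by nra.
assert (Hphi: W*(2*x-1-W) - d*(x-1/2-W) >= (3/50+d/4)*(2*x-1-(3/50+d/4)) - d*(x-1/2-(3/50+d/4))) by nra.
nra. Qed.

Lemma P4b (x y z d W A C : R) : 0 <= x -> 0 <= y -> 0 <= z -> x + y + z = 1 -> z <= y -> 2*x^2+z^2 >= 1 -> 699/1000 <= x -> y <= 293/1000 ->
  1/10 <= d -> 3/50 + d/4 <= W -> W <= x - 1/2 -> A + C = y + z + W - d -> y + 3/50 - d/4 <= A -> 0 <= C -> C*(C+d) >= z^2 ->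
  0 <= W*(2*x-1-W) - d*(x-1/2-W) + A*C - y*z.
Proof. intros.
assert (E: W*(2*x-1-W) - d*(x-1/2-W) + A*C - y*z = W*(2*x-1-W) - d*(x-1/2-W) + C*(W-d) - (z-C)*(y-C)).
{ replace A with (y+z+W-d-C) by lra. ring. }
rewrite E. clear E.
destruct (Rle_lt_dec C z) as [Hcz|Hcz].
- assert (Hzc: (z - C)*(z+C) <= C*d) by nra.
  assert (Hy: (z-C)*(y-C) <= y*(z-C)) by nra.
  destruct (Rle_lt_dec d W).
  + assert (W*(2*x-1-W) - d*(x-1/2-W) >= W*(2*x-1)/2) by nra.
    assert (z - C <= d/2) by nra.
    nra.
  + assert (z - C <= d/2) by nra.
    nra.
- assert (HC: C <= z + W - 3/50 - 3*d/4) by lra.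
  destruct (Rle_lt_dec C y).
  + assert ((C-z)*(y-C) >= 0) by nra.
    destruct (Rle_lt_dec d W); nra.
  + destruct (Rle_lt_dec d W); nra.
Qed.

Lemma caseC (x y z k u v C d : R) : 0 <= x -> 0 <= y -> 0 <= z -> x + y + z = 1 -> z <= y -> 2*x^2+z^2 >= 1 -> 699/1000 <= x ->
  0 <= k -> k^2 = x^2 - 2*x*(y+z) - 2*y*z -> y <= k -> 0 < u -> 0 < v -> 0 <= d -> 
  1/2 <= C -> C <= x + z - k - (u+v) ->
  C^2 + 2*(2*k*u + u^2 - d^2/4) + 2*(2*y*v+v^2-d^2/4) > 1 - x^2 - y^2 -> False.
Proof. intros. nra. Qed.

Lemma facts (x y z : R) : 0 <= x -> 0 <= y -> 0 <= z -> x + y + z = 1 -> z <= y -> 2*x^2+z^2 >= 1 ->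
  699/1000 <= x /\ y <= 293/1000 /\ 3/25 <= x - 2*y /\ x*y+y*z+z*x <= 2331/10000 /\ y^2 <= x^2 - 2*x*(y+z) - 2*y*z.
Proof. intros.
assert (Hz: z <= (1-x)/2) by lra.
assert (Hx: 699/1000 <= x).
{ assert (z^2 <= ((1-x)/2)^2) by (apply pow_incr; lra). nra. }
split; [exact Hx|].
split.
{ destruct (Rle_lt_dec y (293/1000)); [assumption|].
  exfalso. assert (x + z < 707/1000) by lra.
  assert (x^2 < (707/1000 - z)^2) by (apply pow_lt_compat_l_alt || nra). nra. }
split.
{ destruct (Rle_lt_dec (3/25) (x - 2*y)); [assumption|].
  exfalso. assert (3*x + 2*z < 53/25) by lra.
  assert (x < (53/25 - 2*z)/3) by lra.
  assert (x^2 < ((53/25 - 2*z)/3)^2) by nra. nra. }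
split.
{ assert (y^2+z^2 >= (y+z)^2/2) by nra.
  assert ((x+y+z)^2 = 1) by (rewrite H2; ring).
  nra. }
{ assert ((x+y+z)^2 = 1) by (rewrite H2; ring). nra. }
Qed.

Lemma sq_lt (a b : R) : 0 <= a -> 0 <= b -> b^2 < a^2 -> b < a.
Proof. intros. destruct (Rle_lt_dec a b); [|assumption].
  assert (a^2 <= b^2) by (apply pow_incr; lra). lra. Qed.
Lemma sq_le (a b : R) : 0 <= a -> 0 <= b -> b^2 <= a^2 -> b <= a.
Proof. intros. destruct (Rle_lt_dec b a); [assumption|].
  assert (a^2 < b^2) by nra. lra. Qed.
Lemma shift_pos (t s q : R) : 0 <= t -> 0 <= s -> t*(t+s) > q^2 -> 0 <= q -> 0 < t + s/2 - q.
Proof. intros. assert (q < t + s/2).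
  { apply sq_lt; try lra. replace ((t+s/2)^2) with (t*(t+s) + s^2/4) by field.
    assert (0 <= s^2) by apply pow2_ge_0. lra. }
  lra. Qed.

Lemma core (x y z A B C d : R) : 0 <= x -> x <= 1 -> 0 <= y -> 0 <= z -> x + y + z = 1 -> z <= y -> 2*x^2+z^2 >= 1 ->
  0 <= A -> 0 <= B -> 0 <= C -> 0 <= d -> A + B + C + d = 1 ->
  A*(A+d) > x^2 - 2*x*(y+z) - 2*y*z ->
  B*(B+d) > y^2 -> C*(C+d) > z^2 ->
  A*(A+d) + B*(B+d) + C*(C+d) > x^2+y^2+z^2 ->
  A^2 + 2*B*(B+d) + 2*C*(C+d) > x^2 + 2*y^2 + 2*z^2 ->
  2*A*(A+d) + B^2 + 2*C*(C+d) > 3*x^2 + 2*y^2 + 3*z^2 - 1 ->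
  2*A*(A+d) + 2*B*(B+d) + C^2 > 3*x^2 + 3*y^2 + 2*z^2 - 1 ->
  False.
Proof.
intros Hx0 Hx1 Hy0 Hz0 Hs Hzy He HA HB HC Hd HS h1 h2 h3 h4 h5 h6 h7.
destruct (facts x y z Hx0 Hy0 Hz0 Hs Hzy He) as [Fx [Fy [Fxy [Fsig FK]]]].
assert (HS2: x^2+y^2+z^2+2*(x*y+y*z+z*x) = 1).
{ assert (E1: (x+y+z)^2 = 1) by (rewrite Hs; ring). rewrite <- E1. ring. }
assert (H4e: A*B+B*C+C*A + d/2 < x*y+y*z+z*x).
{ assert (Hsq: (A+B+C)^2 = (1-d)^2) by (f_equal; lra).
  assert (Hd1: d*(A+B+C) = d*(1-d)) by (f_equal; lra).
  lra. }
destruct (Rle_lt_dec 2 (3*A+d)) as [Hc1|Hc1].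
{ apply (case1 x y z A B C d); lra. }
destruct (Rle_lt_dec (9/5) (3*A+d)) as [Hc2|Hc2].
{
  assert (Hu: 0 <= B + d/2 - y) by (pose proof (shift_pos B d y HB Hd h2 Hy0); lra).
  assert (Hv: 0 <= C + d/2 - z) by (pose proof (shift_pos C d z HC Hd h3 Hz0); lra).
  assert (Hz := zoneZ x y z (B + d/2 - y) (C + d/2 - z) d Hx0 Hy0 Hz0 Hs Hzy Fx Fy Hu Hv Hd
     ltac:(lra) ltac:(lra) ltac:(lra) ltac:(lra) ltac:(lra)).
  assert (HAe: A = x - ((B + d/2 - y) + (C + d/2 - z))) by lra.
  rewrite HAe in h4, h5.
  assert (Hzz: z = 1 - x - y) by lra.
  rewrite Hzz in h4, h5, Hz.
  clear - h4 h5 Hz. lra. }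
assert (HK0: 0 <= x^2 - 2*x*(y+z) - 2*y*z) by (pose proof (pow2_ge_0 y); lra).
assert (Hk0: 0 <= sqrt (x^2 - 2*x*(y+z) - 2*y*z)) by (apply sqrt_pos).
assert (Hk2: (sqrt (x^2 - 2*x*(y+z) - 2*y*z))^2 = x^2 - 2*x*(y+z) - 2*y*z) by (rewrite pow2_sqrt; lra).
set (k := sqrt (x^2 - 2*x*(y+z) - 2*y*z)) in *.
assert (Hyk: y <= k) by (apply sq_le; lra).
assert (Hu: 0 < A + d/2 - k) by (apply shift_pos; lra).
destruct (Rle_lt_dec (1/2) B) as [HBb|HBb].
{ assert (Hv: 0 <= C + d/2 - z) by (pose proof (shift_pos C d z HC Hd h3 Hz0); lra).
  assert (HBe: B = x + y - k - ((A + d/2 - k)+(C + d/2 - z))) by lra.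
  destruct (Rle_lt_dec (A + d/2 - k) (3/50 + d/4)) as [Hus|Hus].
  { apply (caseB x y z k (A + d/2 - k) (C + d/2 - z) B d); try lra. }
  { assert (HP: 0 <= (x-B)*(2*x-1-(x-B)) - d*(x-1/2-(x-B)) + A*C - y*z).
    { destruct (Rle_lt_dec d (1/10)).
      - apply (P4 x y z d (x-B) A C); lra.
      - apply (P4b x y z d (x-B) A C); lra. }
    assert (HBp: B*(A+B+C+d) = B*1) by (rewrite HS; ring).
    assert (HXp: x*(x+y+z) = x*1) by (rewrite Hs; ring).
    lra. } }
destruct (Rle_lt_dec (1/2) C) as [HCb|HCb].
{ assert (Hv: 0 < B + d/2 - y) by (apply shift_pos; lra).
  apply (caseC x y z k (A + d/2 - k) (B + d/2 - y) C d); try lra. }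
assert (HM := caseM A B C d HA HB HC Hd HS ltac:(lra) ltac:(lra) ltac:(lra)).
lra.
Qed.

Theorem mainTheorem7 (a1 a2 x y z a12 a13 a23 d : R) :
  good_pair a1 a2 ->
  canonical_rep a1 a2 x y z ->
  let a3 := 1 - x^2 in
  0 <= a12 -> 0 <= a13 -> 0 <= a23 -> 0 <= d ->
  a12 * (a12 + d) > a1 + a2 - 1 ->
  a13 * (a13 + d) > a1 + a3 - 1 ->
  a23 * (a23 + d) > a2 + a3 - 1 ->
  a12 * (a12 + d) + a13 * (a13 + d) + a23 * (a23 + d) > a1 + a2 + a3 - 1 ->
  a12^2 + 2 * a13^2 + 2 * a23^2 + 2 * a13 * d + 2 * a23 * d
    > 2 * a1 + 2 * a2 + 3 * a3 - 3 ->
  2 * a12^2 + a13^2 + 2 * a23^2 + 2 * a12 * d + 2 * a23 * d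
    > 2 * a1 + 3 * a2 + 2 * a3 - 3 ->
  2 * a12^2 + 2 * a13^2 + a23^2 + 2 * a12 * d + 2 * a13 * d
    > 3 * a1 + 2 * a2 + 2 * a3 - 3 ->
  a12 + a13 + a23 + d > 1.
Proof.
intros Hgood Hcan a3 H12 H13 H23 Hd g1 g2 g3 g4 g5 g6 g7.
destruct Hcan as [Hrep Huniq].
destruct Hgood as [_ [_ [_ [Hmax [x' [y' [z' [[Hrep' _] Hq]]]]]]]].
destruct (Huniq x' y' z' Hrep') as [Ex [Ey Ez]].
subst x' y' z'.
destruct Hrep as [[Hx0 Hx1] [[Hy0 Hy1] [[Hz0 Hz1] [Hs [Hxh [Ha1 Ha2]]]]]].
assert (Ha21: a2 <= a1).
{ eapply Rle_trans; [|exact Hmax]. eapply Rle_trans; [|apply Rmax_l]. apply Rmax_l. }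
assert (Hzy: z <= y).
{ apply sq_le; lra. }
unfold a3 in *. subst a1 a2.
apply Rnot_le_gt. intro HS.
set (A := 1 - a13 - a23 - d).
assert (HA: a12 <= A) by (unfold A; lra).
assert (HAA: a12*(a12+d) <= A*(A+d)) by (apply Rmult_le_compat; lra).
assert (HA2: a12^2 <= A^2) by (apply pow_incr; lra).
assert (HS2: x^2+y^2+z^2+2*(x*y+y*z+z*x) = 1).
{ assert (E1: (x+y+z)^2 = 1) by (rewrite Hs; ring). rewrite <- E1. ring. }
apply (core x y z A a13 a23 d); try lra.
unfold A; lra.
Qed.
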